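(* Let $n\ge 2$ and let $\mathbf{A}$ be an $n$-dimensional cyclic Leibniz algebra over $\mathbb{C}$. Then $\mathbf{A}$ is isomorphic to one of the following Leibniz algebras $\mathbf{L}$, each having basis $\{a,a^2,\ldots,a^n\}$ with $a\,a^i=a^{i+1}$ for $1\le i<n$, $a^i v=0$ for all $i\ge2$ and all $v$, and $aa^n$ given by: (1) $aa^n=0$ (nilpotent case); (2) $aa^n=a^n$; (3) $aa^n=a^k+\alpha_{k+1}a^{k+1}+\cdots+\alpha_na^n$, for some $2\le k\le n-1$ and some $(\alpha_{k+1},\ldots,\alpha_n)\in\mathbb{C}^{n-k}$. Moreover the choice is unique in the following sense: algebras from different cases among (1), (2), (3) are non-isomorphic, and two algebras from case (3), with data $(k,(\alpha_{k+1},\ldots,\alpha_n))$ and $(k',(\alpha'_{k'+1},\ldots,\alpha'_n))$, are isomorphic if and only if $k=k'$ and $(\alpha_{k+1},\ldots,\alpha_n)\sim(\alpha'_{k+1},\ldots,\alpha'_n)$; that is, the isomorphism classes in case (3) with a given $k$ correspond to the elements of $\mathbb{C}^{n-k}/\sim$.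
   Context: A (left) Leibniz algebra is a vector space with a bilinear product such that $x(yz)=(xy)z+y(xz)$ for all $x,y,z$. A cyclic Leibniz algebra is a Leibniz algebra generated by a single element. For an element $x$ set $x^1=x$ and $x^{j+1}=x\,x^j$. For $d\ge1$, the equivalence relation $\sim$ on $\mathbb{C}^d$ is defined by $(\gamma_1,\ldots,\gamma_d)\sim(\gamma'_1,\ldots,\gamma'_d)$ iff $(\gamma_1,\gamma_2,\ldots,\gamma_d)=(\omega^d\gamma'_1,\omega^{d-1}\gamma'_2,\ldots,\omega\gamma'_d)$ for some $(d+1)$-th root of unity $\omega$. *)

(* Defs.v *)
From HB Require Import structures.
From mathcomp Require Import all_boot all_order all_algebra.
From mathcomp Require Import complex.
From mathcomp Require Import Rstruct.
Set Implicit Arguments. Unset Strict Implicit. Unset Printing Implicit Defensive.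
Import Order.TTheory GRing.Theory Num.Theory.
Local Open Scope ring_scope.

Definition CC : fieldType := (Rdefinitions.R)[i].

Definition bilinear_mul (V : lmodType CC) (mul : V -> V -> V) : Prop :=
  (forall (c : CC) (x y z : V), mul (c *: x + y) z = c *: mul x z + mul y z) /\
  (forall (c : CC) (x y z : V), mul z (c *: x + y) = c *: mul z x + mul z y).

Definition leibniz_identity (V : lmodType CC) (mul : V -> V -> V) : Prop :=
  forall x y z : V, mul x (mul y z) = mul (mul x y) z + mul y (mul x z).

Definition is_leibniz_algebra (V : lmodType CC) (mul : V -> V -> V) : Prop :=
  bilinear_mul mul /\ leibniz_identity mul.

Definition is_cyclic_algebra (V : vectType CC) (mul : V -> V -> V) : Prop :=
  exists x : V, forall U : {vspace V},
    x \in U -> (forall u v, u \in U -> v \in U -> mul u v \in U) -> U = fullv.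

Definition alg_iso (V W : lmodType CC) (mulV : V -> V -> V) (mulW : W -> W -> W)
  : Prop :=
  exists f : V -> W,
    (forall (c : CC) (x y : V), f (c *: x + y) = c *: f x + f y) /\
    bijective f /\
    (forall x y : V, f (mulV x y) = mulW (f x) (f y)).

(* the k-th coordinate (0-based) of a row vector, 0 if out of range *)
Definition rcoef (m : nat) (y : 'rV[CC]_m) (k : nat) : CC :=
  if insub k is Some i then y 0 i else 0.

(* The model algebra L_c on C^n with basis e_0,...,e_{n-1},
   e_{i-1} playing the role of a^i: a a^i = a^{i+1} (i < n), a a^n = c,
   a^i v = 0 for i >= 2.  Bilinearly extended:
   x * y = x_0 *: (sum_{j<n-1} y_j e_{j+1} + y_{n-1} *: c). *)
Definition model_mul (n : nat) (c : 'rV[CC]_n) (x y : 'rV[CC]_n) : 'rV[CC]_n :=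
  rcoef x 0 *: (\row_(j < n) (if j == 0%N :> nat then 0 else rcoef y j.-1)
                + rcoef y n.-1 *: c).

Definition apow (n : nat) (i : nat) : 'rV[CC]_n :=
  \row_(j < n) (if j == i.-1 :> nat then 1 else 0).

Definition c_case1 (n : nat) : 'rV[CC]_n := 0.
Definition c_case2 (n : nat) : 'rV[CC]_n := apow n n.
(* case (3): a a^n = a^k + alpha_{k+1} a^{k+1} + ... + alpha_n a^n,
   where alpha_{k+1+i} = rcoef alpha i for i < n - k *)
Definition c_case3 (n k : nat) (alpha : 'rV[CC]_(n - k)) : 'rV[CC]_n :=
  apow n k + \sum_(i < n - k) rcoef alpha i *: apow n (k + 1 + i).

(* (g_1,...,g_d) ~ (g'_1,...,g'_d) iff g_i = w^(d+1-i) g'_i for a (d+1)-th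
   root of unity w;  0-based: g_i = w^(d - i) g'_i. *)
Definition sim_rel (d : nat) (g g' : 'rV[CC]_d) : Prop :=
  exists w : CC, w ^+ d.+1 = 1 /\
    forall i : 'I_d, g 0 i = w ^+ (d - i) * g' 0 i.

(* Main.v *)
Require Import Defs.
From HB Require Import structures.
From mathcomp Require Import all_boot all_order all_algebra complex Rstruct.
From mathcomp Require Import ring zify.
From Stdlib Require Import Lia.
Set Implicit Arguments. Unset Strict Implicit. Unset Printing Implicit Defensive.
Import Order.TTheory GRing.Theory.
Local Open Scope ring_scope.


Definition Tm (n : nat) (c : 'rV[CC]_n) (y : 'rV[CC]_n) : 'rV[CC]_n :=
  \row_(j < n) (if j == 0%N :> nat then 0 else rcoef y j.-1) + rcoef y n.-1 *: c.

Lemma model_mulE n (c x y : 'rV[CC]_n) : model_mul c x y = rcoef x 0 *: Tm c y.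
Proof. by []. Qed.

Lemma rcoefE n (y : 'rV[CC]_n) (i : 'I_n) : rcoef y i = y 0 i.
Proof. rewrite /rcoef; case: insubP => [j _ hj|]; last by rewrite /= ltn_ord.
by congr (y 0 _); apply: val_inj. Qed.

Lemma rcoefN n (y : 'rV[CC]_n) k : (n <= k)%N -> rcoef y k = 0.
Proof. by move=> h; rewrite /rcoef insubF // ltnNge h. Qed.

Lemma rcoef_lin n (a : CC) (y z : 'rV[CC]_n) k :
  rcoef (a *: y + z) k = a * rcoef y k + rcoef z k.
Proof. by rewrite /rcoef; case: insubP => // [i _ _|]; rewrite ?mxE ?mulr0 ?addr0. Qed.

Lemma alg_iso_trans (U V W : lmodType CC) (mU : U -> U -> U) (mV : V -> V -> V)
  (mW : W -> W -> W) : alg_iso mU mV -> alg_iso mV mW -> alg_iso mU mW.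
Proof.
move=> [f [fl [fb fm]]] [g [gl [gb gm]]]; exists (g \o f); split; last split.
- by move=> c x y /=; rewrite fl gl.
- exact: bij_comp.
- by move=> x y /=; rewrite fm gm.
Qed.

Definition scl n (lam : CC) (y : 'rV[CC]_n) : 'rV[CC]_n := \row_(j < n) (lam ^+ j.+1 * y 0 j).

Lemma rcoef_scl n lam (y : 'rV[CC]_n) k : rcoef (scl lam y) k = lam ^+ k.+1 * rcoef y k.
Proof.
case: (ltnP k n) => h; last by rewrite !rcoefN // mulr0.
by rewrite -[k]/(nat_of_ord (Ordinal h)) !rcoefE mxE.
Qed.

Lemma scale_iso n (c c' : 'rV[CC]_n) (lam : CC) : lam != 0 ->
  (forall j : 'I_n, c 0 j = lam ^+ (n - j) * c' 0 j) ->
  alg_iso (model_mul c) (model_mul c').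
Proof.
move=> l0 hc; exists (scl lam); split; last split.
- by move=> a x y; apply/rowP => j; rewrite !mxE; ring.
- exists (scl lam^-1) => y; apply/rowP => j; rewrite !mxE mulrA -exprMn
     ?mulVf ?mulfV // expr1n mul1r //.
- move=> x y; rewrite !model_mulE rcoef_scl; apply/rowP => j; rewrite !mxE.
  rewrite !rcoef_scl hc.
  have jn := ltn_ord j.
  case: n c c' x y j hc jn => [|m] c c' x y j hc jn //=.
  have e : lam ^+ j.+1 * lam ^+ (m.+1 - j) = lam * lam ^+ m.+1.
    by rewrite -exprD -exprS; congr (_ ^+ _); lia.
  case: (nat_of_ord j) e jn => [|j'] e jn /=.
    rewrite subn0 expr1.
    have G : forall (R : comNzRingType) (l X B P C : R),
      l * (X * (0 + B * (P * C))) = l * X * (0 + P * B * C) by move=> *; ring.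
    exact: (G CC).
  set u := lam ^+ (m.+1 - j'.+1) in e *.
  set A := rcoef y j'; set B := rcoef y m; set X := rcoef x 0; set C := c' 0 j.
  have G : forall (R : comNzRingType) (L1 l u P X A B C : R), (l * L1) * u = l * P ->
     (l * L1) * (X * (A + B * (u * C))) = l * X * (L1 * A + P * B * C).
    move=> R L1 l u' P X' A' B' C' h.
    transitivity (l * L1 * X' * A' + (l * L1 * u') * (X' * B' * C')); first by ring.
    rewrite h; ring.
  rewrite expr1 [lam ^+ j'.+2]exprS; apply: (G CC); by rewrite -exprS.
Qed.



Lemma Tm_is_linear n (c : 'rV[CC]_n) : linear (Tm c).
Proof.
move=> a y z; apply/rowP => j; rewrite !mxE !rcoef_lin.
case: (_ == _); rewrite ?mulr0 ?addr0; ring.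
Qed.

HB.instance Definition _ n (c : 'rV[CC]_n) :=
  GRing.isLinear.Build CC 'rV[CC]_n 'rV[CC]_n _ (Tm c) (Tm_is_linear c).

Definition MT n (c : 'rV[CC]_n) : 'M[CC]_n := lin1_mx (Tm c).

Lemma MTE n (c : 'rV[CC]_n) y : y *m MT c = Tm c y.
Proof. by rewrite mul_rV_lin1. Qed.

Lemma lin_zero (U W : lmodType CC) (f : U -> W) :
  (forall (c : CC) x y, f (c *: x + y) = c *: f x + f y) -> f 0 = 0.
Proof.
move=> fl; have h := fl 1 0 0; rewrite !scale1r addr0 in h.
by apply: (addrI (f 0)); rewrite addr0 -h.
Qed.

Lemma lin_sum (U W : lmodType CC) (f : U -> W) :
  (forall (c : CC) x y, f (c *: x + y) = c *: f x + f y) ->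
  forall m (a : 'I_m -> CC) (v : 'I_m -> U),
  f (\sum_(i < m) a i *: v i) = \sum_(i < m) a i *: f (v i).
Proof.
move=> fl; elim=> [|m IH] a v; first by rewrite !big_ord0 (lin_zero fl).
by rewrite !big_ord_recr /= addrC fl IH addrC.
Qed.

Lemma lin_inj0 (U W : lmodType CC) (f : U -> W) :
  (forall (c : CC) x y, f (c *: x + y) = c *: f x + f y) -> injective f ->
  forall x, f x = 0 -> x = 0.
Proof. by move=> fl fi x h; apply: fi; rewrite h (lin_zero fl). Qed.

Definition ee n (j : nat) : 'rV[CC]_n := \row_(k < n) (k == j :> nat)%:R.

Lemma rcoef_ee n (j k : nat) : rcoef (ee n j) k = ((k == j) && (k < n)%N)%:R.
Proof.
case: (ltnP k n) => h; last by rewrite rcoefN // andbF.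
by rewrite -[k]/(nat_of_ord (Ordinal h)) rcoefE mxE /= andbT.
Qed.

Lemma Tm_ee n (c : 'rV[CC]_n) j : (j.+1 < n)%N -> Tm c (ee n j) = ee n j.+1.
Proof.
move=> h; apply/rowP => k; rewrite !mxE !rcoef_ee.
have -> : (n.-1 == j) = false by apply/negbTE; lia.
rewrite /= mul0r addr0.
case: k => [[|k] hk] //=.
have -> : (k < n)%N by lia.
by rewrite andbT.
Qed.

Lemma Tm_last n (c : 'rV[CC]_n) : (0 < n)%N -> Tm c (ee n n.-1) = c.
Proof.
move=> h; apply/rowP => k; rewrite !mxE !rcoef_ee eqxx.
have -> : (n.-1 < n)%N by lia.
case: k => [[|k] hk] //=; rewrite mul1r ?add0r //.
have -> : (k == n.-1) = false by apply/negbTE; lia.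
by rewrite add0r.
Qed.

Lemma ee_pow n (c : 'rV[CC]_n) j : (j < n)%N -> ee n 0 *m MT c ^+ j = ee n j.
Proof.
elim: j => [|j IH] h; first by rewrite expr0 mulmx1.
by rewrite exprSr mulmxA IH ?MTE ?Tm_ee //; lia.
Qed.

Lemma ee_pown n (c : 'rV[CC]_n) : (0 < n)%N -> ee n 0 *m MT c ^+ n = c.
Proof.
move=> h; have e : MT c ^+ n = MT c ^+ n.-1 * MT c by rewrite -exprSr prednK.
by rewrite e mulmxA ee_pow ?MTE ?Tm_last //; lia.
Qed.

Lemma row_ee n (y : 'rV[CC]_n) : y = \sum_(i < n) y 0 i *: ee n i.
Proof.
apply/rowP => k; rewrite summxE (bigD1 k) //=.
rewrite (@big1 CC) ?addr0; first by rewrite !mxE eqxx mulr1.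
move=> i ik; rewrite !mxE.
have -> : (k == i :> nat) = false by apply/negbTE; rewrite eq_sym.
by rewrite mulr0.
Qed.

Lemma powM n (A : 'M[CC]_n) a b : A ^+ a *m A ^+ b = A ^+ (a + b).
Proof. by rewrite mulmxE exprD. Qed.

Lemma CH n (c : 'rV[CC]_n) : (0 < n)%N ->
  MT c ^+ n = \sum_(i < n) c 0 i *: MT c ^+ i.
Proof.
move=> h; apply/row_matrixP => j.
rewrite !rowE.
have ej : delta_mx 0 j = ee n j :> 'rV[CC]_n.
  by apply/rowP => k; rewrite !mxE eqxx /=.
rewrite ej -(ee_pow c (ltn_ord j)) -mulmxA powM addnC -powM mulmxA ee_pown //.
rewrite {1}(row_ee c) mulmx_suml mulmx_sumr; apply: eq_bigr => i _.
rewrite -scalemxAl -scalemxAr; congr (_ *: _).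
by rewrite -(ee_pow c (ltn_ord i)) -!mulmxA !powM addnC.
Qed.



Lemma sum_ee_coef n (a : 'I_n -> CC) (j : 'I_n) : (\sum_(i < n) a i *: ee n i) 0 j = a j.
Proof.
rewrite summxE (bigD1 j) //= (@big1 CC) ?addr0; first by rewrite !mxE eqxx mulr1.
move=> i ij; rewrite !mxE.
have -> : (j == i :> nat) = false by apply/negbTE; rewrite eq_sym.
by rewrite mulr0.
Qed.

Lemma iso_nec n (c c' : 'rV[CC]_n) : (2 <= n)%N ->
  alg_iso (model_mul c) (model_mul c') ->
  exists lam : CC, lam != 0 /\ forall j : 'I_n, c 0 j = lam ^+ (n - j) * c' 0 j.
Proof.
move=> hn [f [fl [[g fg gf] fm]]].
have finj : injective f := can_inj fg.
have n0 : (0 < n)%N by lia.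
set b := f (ee n 0); set lam := rcoef b 0.
have hstep : forall y, f (y *m MT c) = lam *: (f y *m MT c').
  move=> y; rewrite !MTE; have := fm (ee n 0) y.
  by rewrite !model_mulE rcoef_ee /= n0 scale1r.
have hpow : forall m y, f (y *m MT c ^+ m) = lam ^+ m *: (f y *m MT c' ^+ m).
  elim => [|m IH] y; first by rewrite !expr0 !mulmx1 scale1r.
  by rewrite [MT c ^+ _]exprSr [MT c' ^+ _]exprSr !mulmxA hstep IH -scalemxAl scalerA exprS.
have l0 : lam != 0.
  apply/eqP => l0.
  have : f (ee n 0 *m MT c) = 0 by rewrite hstep l0 scale0r.
  rewrite MTE Tm_ee // => /(lin_inj0 fl finj) /rowP /(_ (Ordinal hn)).
  rewrite !mxE /= => h; have := @oner_neq0 CC; by rewrite -[X in X != _]mulr1n h eqxx.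
exists lam; split => // j.
have fc : f c = lam ^+ n *: (b *m MT c' ^+ n) by rewrite -{1}(ee_pown c) // hpow.
rewrite CH // mulmx_sumr scaler_sumr in fc.
have fi : forall i : 'I_n, b *m MT c' ^+ i = lam^-1 ^+ i *: f (ee n i).
  move=> i; rewrite -(ee_pow c (ltn_ord i)) hpow scalerA -exprMn mulVf // expr1n scale1r //.
have fc2 : f c = \sum_(i < n) c 0 i *: f (ee n i) by rewrite {1}(row_ee c) lin_sum.
pose d i := c 0 i - lam ^+ n * c' 0 i * lam^-1 ^+ i.
have : f (\sum_(i < n) d i *: ee n i) = 0.
  rewrite lin_sum //; apply: (@etrans _ _ (f c - f c)); last exact: subrr.
  rewrite {1}fc2 fc -sumrB; apply: eq_bigr => i _.
  by rewrite -scalemxAr fi !scalerA -scalerBl /d.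
move=> /(lin_inj0 fl finj) /rowP /(_ j); rewrite sum_ee_coef mxE /d => /eqP.
rewrite subr_eq0 => /eqP ->.
have e : lam ^+ n = lam ^+ (n - j) * lam ^+ j by rewrite -exprD subnK // ltnW.
rewrite e -!mulrA; congr (_ * _).
by rewrite mulrCA -exprMn mulfV // expr1n mulr1.
Qed.



Lemma apowE n i (j : 'I_n) : apow n i 0 j = (j == i.-1 :> nat)%:R.
Proof. by rewrite /apow mxE; case: (_ == _). Qed.

Lemma case1E n (j : 'I_n) : c_case1 n 0 j = 0.
Proof. by rewrite /c_case1 mxE. Qed.

Lemma case2E n (j : 'I_n) : c_case2 n 0 j = (j == n.-1 :> nat)%:R.
Proof. by rewrite /c_case2 apowE. Qed.

Lemma case3E n k (alpha : 'rV[CC]_(n - k)) (j : 'I_n) :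
  c_case3 alpha 0 j = (j == k.-1 :> nat)%:R + (if (k <= j)%N then rcoef alpha (j - k) else 0).
Proof.
rewrite /c_case3 mxE apowE summxE; congr (_ + _).
case: ifP => hk.
  have hi : (j - k < n - k)%N by have := ltn_ord j; lia.
  rewrite (bigD1 (Ordinal hi)) //= (@big1 CC) ?addr0.
    rewrite mxE apowE /=.
    have -> : (j == (k + 1 + (j - k)).-1 :> nat) by rewrite addn1 addSn /= subnKC.
    by rewrite mulr1.
  move=> i hi2; rewrite mxE apowE.
  have -> : (j == (k + 1 + i).-1 :> nat) = false.
    rewrite addn1 addSn /=; apply/negbTE; apply/eqP => e; move/eqP: hi2; apply; apply: val_inj => /=; lia.
  by rewrite mulr0.
rewrite (@big1 CC) // => i _; rewrite mxE apowE.
have -> : (j == (k + 1 + i).-1 :> nat) = false by rewrite addn1 addSn /=; apply/negbTE; lia.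
by rewrite mulr0.
Qed.

Lemma root_exists (m : nat) (a : CC) : (0 < m)%N -> exists x : CC, x ^+ m = a.
Proof.
move=> hm.
pose CCK : closedFieldType := CC.
have [x hx] := @GRing.solve_monicpoly CCK m (fun i : nat => if i == 0%N then (a : CCK) else 0) hm.
exists x; rewrite [LHS]hx.
case: m hm hx => // m _ _.
rewrite big_ord_recl /= expr0 mulr1 big1 ?addr0 // => i _.
by rewrite mul0r.
Qed.

Lemma expf_neq0' (x : CC) m : x != 0 -> x ^+ m != 0.
Proof. by move=> h; rewrite expf_eq0 negb_and h orbT. Qed.



Lemma pow_contra (lam : CC) m : lam != 0 -> 0 = lam ^+ m -> False.
Proof. by move=> l0 /esym /eqP; rewrite (negbTE (expf_neq0' _ l0)). Qed.

Lemma ni12 n : (2 <= n)%N -> ~ alg_iso (model_mul (c_case1 n)) (model_mul (c_case2 n)).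
Proof.
move=> hn /(iso_nec hn) [lam [l0 hc]].
have hj : (n.-1 < n)%N by lia.
have := hc (Ordinal hj); rewrite case1E case2E /= eqxx mulr1; exact: pow_contra.
Qed.

Lemma ni13 n k (alpha : 'rV[CC]_(n - k)) : (2 <= n)%N -> (2 <= k <= n - 1)%N ->
  ~ alg_iso (model_mul (c_case1 n)) (model_mul (c_case3 alpha)).
Proof.
move=> hn hk /(iso_nec hn) [lam [l0 hc]].
have hj : (k.-1 < n)%N by lia.
have := hc (Ordinal hj); rewrite case1E case3E /= eqxx.
have -> : (k <= k.-1)%N = false by lia.
rewrite addr0 mulr1; exact: pow_contra.
Qed.

Lemma ni23 n k (alpha : 'rV[CC]_(n - k)) : (2 <= n)%N -> (2 <= k <= n - 1)%N ->
  ~ alg_iso (model_mul (c_case2 n)) (model_mul (c_case3 alpha)).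
Proof.
move=> hn hk /(iso_nec hn) [lam [l0 hc]].
have hj : (k.-1 < n)%N by lia.
have := hc (Ordinal hj); rewrite case2E case3E /= eqxx.
have -> : (k <= k.-1)%N = false by lia.
have -> : (k.-1 == n.-1) = false by apply/negbTE; lia.
rewrite addr0 mulr1; exact: pow_contra.
Qed.

Lemma ni33 n k k' (alpha : 'rV[CC]_(n - k)) (alpha' : 'rV[CC]_(n - k')) :
  (2 <= n)%N -> (2 <= k <= n - 1)%N -> (2 <= k' <= n - 1)%N -> k <> k' ->
  ~ alg_iso (model_mul (c_case3 alpha)) (model_mul (c_case3 alpha')).
Proof.
move=> hn hk hk' kk /(iso_nec hn) [lam [l0 hc]].
case: (ltngtP k k') => h; last by [].
- have hj : (k.-1 < n)%N by lia.
  have := hc (Ordinal hj); rewrite !case3E /= eqxx.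
  have -> : (k <= k.-1)%N = false by lia.
  have -> : (k' <= k.-1)%N = false by lia.
  have -> : (k.-1 == k'.-1) = false by apply/negbTE; lia.
  rewrite !addr0 mulr0 => /eqP; rewrite oner_eq0 //.
- have hj : (k'.-1 < n)%N by lia.
  have := hc (Ordinal hj); rewrite !case3E /= eqxx.
  have -> : (k <= k'.-1)%N = false by lia.
  have -> : (k' <= k'.-1)%N = false by lia.
  have -> : (k'.-1 == k.-1) = false by apply/negbTE; lia.
  rewrite !addr0 mulr1; exact: pow_contra.
Qed.

Lemma iff33 n k (alpha alpha' : 'rV[CC]_(n - k)) :
  (2 <= n)%N -> (2 <= k <= n - 1)%N ->
  (alg_iso (model_mul (c_case3 alpha)) (model_mul (c_case3 alpha'))
   <-> sim_rel alpha alpha').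
Proof.
move=> hn hk; split.
- move=> /(iso_nec hn) [lam [l0 hc]]; exists lam; split.
    have hj : (k.-1 < n)%N by lia.
    have := hc (Ordinal hj); rewrite !case3E /= eqxx.
    have -> : (k <= k.-1)%N = false by lia.
    have -> : (n - k.-1 = (n - k).+1)%N by lia.
    by rewrite !addr0 mulr1 => /esym h; exact: h.
  move=> i; have hj : (k + i < n)%N by have := ltn_ord i; lia.
  have := hc (Ordinal hj); rewrite !case3E /=.
  have -> : (k + i == k.-1) = false by apply/negbTE; lia.
  have -> : (k <= k + i)%N by lia.
  have -> : (n - (k + i) = n - k - i)%N by lia.
  by rewrite addKn !add0r -[i in rcoef _ i]/(nat_of_ord i) !rcoefE.
- move=> [w [hw hi]].
  have w0 : w != 0 by apply/eqP => w0; move: hw; rewrite w0 expr0n /= => /eqP; rewrite eq_sym oner_eq0.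
  apply: (scale_iso w0) => j; rewrite !case3E.
  case: (ltngtP j k.-1) => h.
  + have -> : (k <= j)%N = false by lia.
    by rewrite !addr0 mulr0.
  + have -> : (k <= j)%N by lia.
    have hi2 : (j - k < n - k)%N by have := ltn_ord j; lia.
    rewrite !add0r -[(j - k)%N]/(nat_of_ord (Ordinal hi2)) !rcoefE hi /=.
    by have -> : (n - k - (j - k) = n - j)%N by have := ltn_ord j; lia.
  + rewrite ?h ?eqxx.
    have -> : (k <= k.-1)%N = false by lia.
    have -> : (n - k.-1 = (n - k).+1)%N by lia.
    by rewrite hw !addr0 mulr1.
Qed.

Lemma classify_c n (c : 'rV[CC]_n) : (2 <= n)%N -> rcoef c 0 = 0 ->
  alg_iso (model_mul c) (model_mul (c_case1 n)) \/
  alg_iso (model_mul c) (model_mul (c_case2 n)) \/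
  (exists (k : nat) (alpha : 'rV[CC]_(n - k)),
      (2 <= k <= n - 1)%N /\ alg_iso (model_mul c) (model_mul (c_case3 alpha))).
Proof.
move=> hn c0.
case: (boolP [exists j : 'I_n, c 0 j != 0]) => [/existsP [j0 hj0]|hno].
  have n0 : (0 < n)%N by lia.
  case: (@arg_minnP _ j0 (fun j : 'I_n => c 0 j != 0) (fun j : 'I_n => nat_of_ord j) hj0)
    => m cm mmin.
  have m0 : (0 < m)%N.
    rewrite lt0n; apply/eqP => e; move: cm; rewrite -(rcoefE c m) e c0 eqxx //.
  have zbelow : forall j : 'I_n, (j < m)%N -> c 0 j = 0.
    move=> j hj; apply/eqP; apply: contraLR hj => /mmin; rewrite -leqNgt //.
  case: (boolP (nat_of_ord m == n.-1)) => [/eqP em|nem].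
    right; left; apply: (scale_iso cm) => j; rewrite case2E.
    case: (boolP (nat_of_ord j == n.-1)) => [/eqP ej|nej].
      have -> : j = m by apply: val_inj; rewrite /= ej em.
      by rewrite em /= mulr1; have -> : (n - n.-1 = 1)%N by lia.
    rewrite mulr0; apply: zbelow; have := ltn_ord j; lia.
  right; right.
  have [lam hlam] := @root_exists (n - m.+1).+1 (c 0 m) isT.
  have l0 : lam != 0 by apply: contraNneq cm => l0; rewrite -hlam l0 expr0n.
  exists m.+1, (\row_(i < n - m.+1) (rcoef c (m.+1 + i) / lam ^+ (n - m.+1 - i))).
  split; first by have := ltn_ord m; lia.
  apply: (scale_iso l0) => j; rewrite case3E /=.
  case: (ltngtP j m) => h.
  + by rewrite zbelow // ?addr0 ?mulr0.
  + have hi2 : (j - m.+1 < n - m.+1)%N by have := ltn_ord j; lia.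
    rewrite add0r -[(j - m.+1)%N]/(nat_of_ord (Ordinal hi2)) rcoefE mxE /=.
    have -> : (m.+1 + (j - m.+1) = j)%N by lia.
    have -> : (n - m.+1 - (j - m.+1) = n - j)%N by have := ltn_ord j; lia.
    rewrite -(rcoefE c j) mulrC -mulrA mulVf ?mulr1 //; exact: expf_neq0'.
  + have -> : j = m by apply: val_inj.
    rewrite ?ltnn ?eqxx addr0 mulr1 -hlam; congr (_ ^+ _); have := ltn_ord m; lia.
left; apply: (@scale_iso _ _ _ 1 (oner_neq0 _)) => j.
rewrite case1E mulr0; apply/eqP.
move: hno; rewrite negb_exists => /forallP /(_ j); by rewrite negbK.
Qed.



Definition pw (V : vectType CC) (mul : V -> V -> V) (x : V) (i : nat) : V :=
  iter i (mul x) x.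

Lemma mul_pw_zero (V : vectType CC) (mul : V -> V -> V) (x : V) :
  bilinear_mul mul -> leibniz_identity mul ->
  forall i z, mul (pw mul x i.+1) z = 0.
Proof.
move=> [bl1 bl2] li.
have ml0 : forall y, mul y 0 = 0 by move=> y; apply: lin_zero => c a b; exact: bl2.
elim=> [|i IH] z.
  have := li x x z; rewrite /pw /= => /(congr1 (fun t => t - mul x (mul x z))).
  by rewrite subrr addrK => /esym.
have := li x (pw mul x i.+1) z; rewrite !IH ml0 addr0 => /esym.
by rewrite /pw /=.
Qed.

Definition Xt (V : vectType CC) (mul : V -> V -> V) (x : V) (m : nat) : m.-tuple V :=
  [tuple pw mul x i | i < m].

Lemma Xt_val (V : vectType CC) (mul : V -> V -> V) (x : V) m :
  tval (Xt mul x m) = mkseq (pw mul x) m.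
Proof.
apply: (@eq_from_nth _ 0); first by rewrite size_tuple size_mkseq.
move=> k; rewrite size_tuple => hi.
by rewrite -[k]/(nat_of_ord (Ordinal hi)) nth_mktuple nth_mkseq.
Qed.

Lemma Xt_nth (V : vectType CC) (mul : V -> V -> V) (x : V) m (i : 'I_m) :
  (Xt mul x m)`_i = pw mul x i.
Proof. by rewrite nth_mktuple. Qed.

Lemma exists_stop (V : vectType CC) (mul : V -> V -> V) (x : V) n :
  \dim (fullv : {vspace V}) = n ->
  exists m, (m <= n)%N /\ pw mul x m \in <<Xt mul x m>>%VS.
Proof.
move=> hd.
case: (boolP [exists m : 'I_n.+1, pw mul x m \in <<Xt mul x m>>%VS]).
  by move=> /existsP [m hm]; exists m; split => //; rewrite -ltnS.
rewrite negb_exists => /forallP hno.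
have hfree : forall m, (m <= n.+1)%N -> free (mkseq (pw mul x) m).
  elim=> [|m IH] hm; first by rewrite /free span_nil dimv0.
  have pr : perm_eq (rcons (mkseq (pw mul x) m) (pw mul x m)) (pw mul x m :: mkseq (pw mul x) m)
    by rewrite perm_rcons.
  rewrite mkseqS (perm_free pr) free_cons IH ?andbT; last by lia.
  have hm' : (m < n.+1)%N by lia.
  by have := hno (Ordinal hm'); rewrite /= Xt_val.
have := hfree _ (leqnn _); rewrite /free size_mkseq => /eqP hdim.
have := dimvS (subvf <<mkseq (pw mul x) n.+1>>%VS); rewrite hdim hd; lia.
Qed.

Lemma abstract_iso (V : vectType CC) (mul : V -> V -> V) n : (2 <= n)%N ->
  \dim (fullv : {vspace V}) = n -> is_leibniz_algebra mul -> is_cyclic_algebra mul ->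
  exists c : 'rV[CC]_n, rcoef c 0 = 0 /\ alg_iso mul (model_mul c).
Proof.
move=> hn hd [[bl1 bl2] li] [x hcyc].
have bl : bilinear_mul mul by split.
have lmr : forall y (a : CC) u v, mul y (a *: u + v) = a *: mul y u + mul y v.
  by move=> y a u v; apply: bl2.
have lml : forall z (a : CC) u v, mul (a *: u + v) z = a *: mul u z + mul v z.
  by move=> z a u v; apply: bl1.
have [m [hmn hm]] := exists_stop mul x hd.
have pwU : forall i, (i < m)%N -> pw mul x i \in <<Xt mul x m>>%VS.
  move=> i hi; apply: memv_span; rewrite Xt_val /mkseq; apply: map_f; rewrite mem_iota.
  by rewrite add0n hi.
have LU : forall v, v \in <<Xt mul x m>>%VS -> mul x v \in <<Xt mul x m>>%VS.
  move=> v /coord_span ->; rewrite (lin_sum (lmr x)); apply: memv_suml => i _.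
  apply: memvZ; rewrite Xt_nth; change (pw mul x i.+1 \in <<Xt mul x m>>%VS).
  case: (ltnP i.+1 m) => h; first exact: pwU.
  have -> : i.+1 = m by have := ltn_ord i; lia.
  exact: hm.
have allU : forall j, pw mul x j \in <<Xt mul x m>>%VS.
  elim=> [|j IH]; last exact: (LU _ IH).
  case: (posnP m) => [m0|mp]; last exact: pwU.
  by move: hm; rewrite m0.
have closed : forall u v, u \in <<Xt mul x m>>%VS -> v \in <<Xt mul x m>>%VS ->
    mul u v \in <<Xt mul x m>>%VS.
  move=> u v /coord_span -> hv; rewrite (lin_sum (lml v)); apply: memv_suml => i _.
  apply: memvZ; rewrite Xt_nth.
  case: i => [[|i] hi] /=; first exact: LU.
  by rewrite mul_pw_zero // mem0v.
have Ufull := hcyc _ (allU 0) closed.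
have em : m = n.
  have := dim_span (Xt mul x m); rewrite Ufull hd size_tuple; lia.
subst m.
have hfree : free (Xt mul x n) by rewrite /free Ufull hd size_tuple eqxx.
pose f (v : V) : 'rV[CC]_n := \row_(j < n) coord (Xt mul x n) j v.
have fl : forall (a : CC) u v, f (a *: u + v) = a *: f u + f v.
  by move=> a u v; apply/rowP => j; rewrite !mxE linearP.
have fZ : forall (a : CC) w, f (a *: w) = a *: f w.
  by move=> a w; have := fl a w 0; rewrite !addr0 (lin_zero fl) addr0.
have fpw : forall i, (i < n)%N -> f (pw mul x i) = ee n i.
  move=> i hi; apply/rowP => j; rewrite !mxE -(Xt_nth mul x (Ordinal hi)) coord_free //.
  by rewrite eq_sym.
have fdecomp : forall v, v = \sum_(i < n) (f v) 0 i *: pw mul x i.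
  move=> v; rewrite {1}(@coord_span _ _ _ (Xt mul x n) v); last by rewrite Ufull memvf.
  by apply: eq_bigr => i _; rewrite mxE Xt_nth.
pose c := f (pw mul x n).
have n0 : (0 < n)%N by lia.
have fL : forall v, f (mul x v) = Tm c (f v).
  move=> v; rewrite {1}(fdecomp v) (lin_sum (lmr x)) (lin_sum fl).
  rewrite {2}(row_ee (f v)) linear_sum; apply: eq_bigr => i _; rewrite linearZ /=.
  congr (_ *: _); change (f (pw mul x i.+1) = Tm c (ee n i)).
  rewrite -(fpw _ (ltn_ord i)).
  case: (ltnP i.+1 n) => h.
    by rewrite (fpw _ (ltn_ord i)) (fpw _ h) Tm_ee.
  have e : i.+1 = n by have := ltn_ord i; lia.
  have e2 : (i : nat) = n.-1 by lia.
  by rewrite (fpw _ (ltn_ord i)) e2 Tm_last // -e2 e.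
have hom : forall u v, f (mul u v) = model_mul c (f u) (f v).
  move=> u v; rewrite model_mulE {1}(fdecomp u) (lin_sum (lml v)).
  rewrite (bigD1 (Ordinal n0)) //= big1 ?addr0.
    by rewrite fZ fL -[0%N]/(nat_of_ord (Ordinal n0)) rcoefE.
  case=> [[|i] hi] //= _.
  by rewrite mul_pw_zero // scaler0.
exists c; split; last first.
  exists f; split => //; split => //.
  exists (fun r : 'rV[CC]_n => \sum_(i < n) r 0 i *: pw mul x i).
    by move=> v; rewrite -fdecomp.
  move=> r; apply/rowP => j; rewrite mxE.
  rewrite (eq_bigr (fun i : 'I_n => r 0 i *: (Xt mul x n)`_i)).
    by rewrite coord_sum_free.
  by move=> i _; rewrite Xt_nth.
have := hom (pw mul x n) x.
have en : n = n.-1.+1 by lia.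
rewrite model_mulE -/c.
have -> : mul (pw mul x n) x = 0 by rewrite en mul_pw_zero.
rewrite (lin_zero fl) (fpw 0 n0) Tm_ee // => /rowP /(_ (Ordinal hn)).
by rewrite !mxE /= mulr1 => <-.
Qed.


Theorem theorem3p5 (n : nat) (hn : (2 <= n)%N) :
  (* classification *)
  (forall (V : vectType CC) (mul : V -> V -> V),
      \dim (fullv : {vspace V}) = n ->
      is_leibniz_algebra mul -> is_cyclic_algebra mul ->
      alg_iso mul (model_mul (c_case1 n)) \/
      alg_iso mul (model_mul (c_case2 n)) \/
      (exists (k : nat) (alpha : 'rV[CC]_(n - k)),
          (2 <= k <= n - 1)%N /\ alg_iso mul (model_mul (c_case3 alpha)))) /\
  (* different cases are non-isomorphic *)
  ~ alg_iso (model_mul (c_case1 n)) (model_mul (c_case2 n)) /\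
  (forall (k : nat) (alpha : 'rV[CC]_(n - k)), (2 <= k <= n - 1)%N ->
      ~ alg_iso (model_mul (c_case1 n)) (model_mul (c_case3 alpha)) /\
      ~ alg_iso (model_mul (c_case2 n)) (model_mul (c_case3 alpha))) /\
  (* case (3) with different k are non-isomorphic *)
  (forall (k k' : nat) (alpha : 'rV[CC]_(n - k)) (alpha' : 'rV[CC]_(n - k')),
      (2 <= k <= n - 1)%N -> (2 <= k' <= n - 1)%N -> k <> k' ->
      ~ alg_iso (model_mul (c_case3 alpha)) (model_mul (c_case3 alpha'))) /\
  (* case (3) with the same k: isomorphic iff the data are ~-equivalent *)
  (forall (k : nat) (alpha alpha' : 'rV[CC]_(n - k)),
      (2 <= k <= n - 1)%N ->
      (alg_iso (model_mul (c_case3 alpha)) (model_mul (c_case3 alpha'))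
       <-> sim_rel alpha alpha')).
Proof.
split.
  move=> V mul hd hl hc.
  have [c [c0 hiso]] := abstract_iso hn hd hl hc.
  case: (classify_c hn c0) => [h|[h|[k [alpha [hk h]]]]].
  - by left; exact: alg_iso_trans hiso h.
  - by right; left; exact: alg_iso_trans hiso h.
  - by right; right; exists k, alpha; split => //; exact: alg_iso_trans hiso h.
split; first exact: ni12.
split; first by move=> k alpha hk; split; [exact: ni13 | exact: ni23].
split; first by move=> k k' alpha alpha' hk hk' kk; exact: ni33.
by move=> k alpha alpha' hk; exact: iff33.
Qed.
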